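(* Consider the Markov decision process with state space $\mathcal X=\{e\}$, action set $\mathcal A_e=\{0,1\}$, transitions $P(e,0,e)=P(e,1,e)=1$, and reward laws $S(e,0,e,\cdot)=\delta_0$, $S(e,1,e,\cdot)=\delta_1$. If $\gamma\in(1/2,1)$, then one can choose the parameters of Algorithm 1 (the deterministic initial function $\hat Q^0$, the initial laws $\nu_k$ and the learning rates $\alpha_k$), with $\varepsilon_k(e)=0$ for all $k\ge0$, such that almost surely, for both $a\in\{0,1\}$, $\sum_{k\ge1}\alpha_k(e,a)\mathbf 1_{\{\tau^{k+1}_{e,a}<\infty\}}=\infty$ and $\sum_{k\ge1}(\alpha_k(e,a))^2\mathbf 1_{\{\tau^{k+1}_{e,a}<\infty\}}<\infty$ (and trivially $\lim_k\varepsilon_k(e)=0$), but $\lim_{k\to\infty}V_{\hat\pi^k}(e)$ almost surely does not exist.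
   Context: General setting: $\mathcal X$ finite state space, finite action sets $\mathcal A_x$, $\mathcal Z=\{(x,a):x\in\mathcal X,a\in\mathcal A_x\}$, transition laws $P(x,a,\cdot)$ on $\mathcal X$, reward laws $S(x,a,y,\cdot)$ on $\mathbb R$ with finite second moment, discount $\gamma\in[0,1)$. For an SM policy $\pi$ (a family of probability measures $\pi(x,\cdot)$ on $\mathcal A_x$) and $x\in\mathcal X$: $X_0=x$, $A_t\sim\pi(X_t,\cdot)$, $X_{t+1}\sim P(X_t,A_t,\cdot)$, and conditionally on the state-action process the rewards $R_{t+1}\sim S(X_t,A_t,X_{t+1},\cdot)$ are independent; $V_\pi(x)=\mathbb E_{x,\pi}[\sum_{t\ge0}\gamma^tR_{t+1}]$. Algorithm 1. Fix a deterministic $\hat Q^0:\mathcal Z\to\mathbb R$. For $k\ge0$, given episodes $i=1,\dots,k$ of the form $(X^i_0,A^i_0,X^i_1,R^i_1,A^i_1,\dots)$, let $\mathcal F^k$ be the $\sigma$-field they generate ($\mathcal F^0$ trivial) and $\mathcal G^i_n=\sigma(X^i_0,A^i_0,X^i_1,R^i_1,A^i_1,\dots,X^i_n,R^i_n,A^i_n)$; suppose $\hat Q^k$ is $\mathcal F^k$-measurable. For some $\mathcal F^k$-measurable $\varepsilon_k:\mathcal X\to[0,1]$ let $\hat\pi^k(x,a)=\frac{\varepsilon_k(x)}{|\mathcal A_x|}+\mathbf 1_{\{a\in\arg\max\hat Q^k(x,\cdot)\}}\frac{1-\varepsilon_k(x)}{|\arg\max\hat Q^k(x,\cdot)|}$.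 For some $\mathcal F^k$-measurable probability $\nu_k$ on $\mathcal Z$, build episode $k+1$ with $(X^{k+1}_0,A^{k+1}_0)\sim\nu_k$ and then policy $\hat\pi^k$. Let $\tau^{k+1}_{x,a}=\inf\{t\ge0:(X^{k+1}_t,A^{k+1}_t)=(x,a)\}$ ($\inf\emptyset=\infty$), $G^{k+1}_{x,a}=\sum_{t\ge0}\gamma^tR^{k+1}_{\tau^{k+1}_{x,a}+t+1}$ (zero if $\tau^{k+1}_{x,a}=\infty$), and for some $\mathcal F^k\vee\mathcal G^{k+1}_{\tau^{k+1}_{x,a}}$-measurable $\alpha_k(x,a)\in[0,1]$ set $\hat Q^{k+1}(x,a)=(1-\alpha_k(x,a)\mathbf 1_{\{\tau^{k+1}_{x,a}<\infty\}})\hat Q^k(x,a)+\alpha_k(x,a)\mathbf 1_{\{\tau^{k+1}_{x,a}<\infty\}}G^{k+1}_{x,a}$. *)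

(* Defs.v *)
From mathcomp Require Import all_boot all_order all_algebra.
From mathcomp Require Import all_classical all_reals all_analysis.

Set Implicit Arguments.
Unset Strict Implicit.
Unset Printing Implicit Defensive.

Import Order.TTheory GRing.Theory Num.Theory.
Import numFieldNormedType.Exports.

Local Open Scope classical_set_scope.
Local Open Scope ring_scope.

(* The MDP: one state e, actions A_e = {0,1} encoded by bool (true = 1),
   P(e,a,e) = 1, S(e,0,e,.) = delta_0, S(e,1,e,.) = delta_1.
   Since the state is always e, an episode is determined by its action
   sequence (A_t)_t and its rewards are R_{t+1} = reward A_t. *)

Definition reward {R : realType} (a : bool) : R := if a then 1 else 0.

(* A history: h i t = action A^i_t of episode i (episodes indexed from 1;
   the coordinate i = 0 is unused). *)
Definition history := nat -> nat -> bool.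

Section MC.
Variable R : realType.
Variable gamma : R.

(* tau^i_{e,a}: first time t with (X^i_t, A^i_t) = (e,a); None = infinity *)
Definition tau (h : history) (i : nat) (a : bool) : option nat :=
  match pselect (exists t, h i t == a) with
  | left pf => Some (ex_minn pf)
  | right _ => None
  end.

Definition ind_fin (o : option nat) : R := if o is Some _ then 1 else 0.

Definition Gret (h : history) (i : nat) (a : bool) : R :=
  match tau h i a with
  | Some s => limn (series (fun t => gamma ^+ t * reward (h i (s + t)%N)))
  | None => 0
  end.

Fixpoint Qhat (Q0 : bool -> R) (alpha : nat -> bool -> history -> R)
  (h : history) (k : nat) (a : bool) : R :=
  match k with
  | 0 => Q0 a
  | k'.+1 =>
      (1 - alpha k' a h * ind_fin (tau h k'.+1 a)) * Qhat Q0 alpha h k' a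
      + alpha k' a h * ind_fin (tau h k'.+1 a) * Gret h k'.+1 a
  end.

Definition in_argmax (q : bool -> R) (a : bool) : bool := q (~~ a) <= q a.
Definition card_argmax (q : bool -> R) : R := if q true == q false then 2 else 1.
Definition egreedy (eps : R) (q : bool -> R) (a : bool) : R :=
  eps / 2 + (if in_argmax q a then (1 - eps) / card_argmax q else 0).

(* V_pi(e) = E_{e,pi}[sum_t gamma^t R_{t+1}] = sum_t gamma^t E[R_{t+1}]; in
   this MDP X_t = e a.s., so E[R_{t+1}] = sum_a pi(e,a) * (mean of S(e,a,e,.)). *)
Definition Vpi (pi : bool -> R) : R :=
  limn (series (fun t => gamma ^+ t *
     (pi false * reward false + pi true * reward true))).

(* cylinder sets of the data space; their sigma-algebra is the sigma-algebra
   generated by all the episodes *)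
Definition cyl : set (set history) :=
  [set C | exists i t b, C = [set h : history | h i t = b]].

Definition hmeasurable (f : history -> R) : Prop :=
  forall B : set R, measurable B -> <<s cyl>> (f @^-1` B).

Definition agree_upto (k : nat) (h h' : history) : Prop :=
  forall i, (1 <= i <= k)%N -> h i = h' i.

(* nu_k (identified with nu_k({(e,1)})) is an F^k-measurable probability on Z *)
Definition nu_ok (nu : nat -> history -> R) : Prop :=
  forall k, hmeasurable (nu k) /\ (forall h, 0 <= nu k h <= 1) /\
    (forall h h', agree_upto k h h' -> nu k h = nu k h').

(* alpha_k(e,a) is [0,1]-valued and F^k \/ G^{k+1}_{tau^{k+1}_{e,a}}-measurable *)
Definition alpha_ok (alpha : nat -> bool -> history -> R) : Prop :=
  forall k a, hmeasurable (alpha k a) /\ (forall h, 0 <= alpha k a h <= 1) /\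
    (forall h h', agree_upto k h h' ->
       (forall t, (if tau h k.+1 a is Some s then (t <= s)%N else true) ->
          h k.+1 t = h' k.+1 t) ->
       alpha k a h = alpha k a h').

(* U i t : i.i.d. uniform[0,1] variables used to sample: episode k+1 has
   A_0 = 1 iff U k 0 < nu_k  and  A_t = 1 iff U k t < pi-hat^k(e,1), t >= 1. *)

Definition episode (Q0 : bool -> R) (nu : nat -> history -> R)
  (alpha : nat -> bool -> history -> R) {T : Type} (U : nat -> nat -> T -> R)
  (k : nat) (h : history) (w : T) : nat -> bool :=
  fun t => if t == 0%N then U k 0%N w < nu k h
           else U k t w < egreedy 0 (Qhat Q0 alpha h k) true.

(* data of the first k episodes (others set to false) *)
Fixpoint hist (Q0 : bool -> R) (nu : nat -> history -> R)
  (alpha : nat -> bool -> history -> R) {T : Type} (U : nat -> nat -> T -> R)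
  (w : T) (k : nat) : history :=
  match k with
  | 0 => fun _ _ => false
  | k'.+1 => fun i => if i == k'.+1 then episode Q0 nu alpha U k' (hist Q0 nu alpha U w k') w
                      else hist Q0 nu alpha U w k' i
  end.

Definition run (Q0 : bool -> R) (nu : nat -> history -> R)
  (alpha : nat -> bool -> history -> R) {T : Type} (U : nat -> nat -> T -> R)
  (w : T) : history := fun i => hist Q0 nu alpha U w i i.

End MC.

(* i.i.d. uniform[0,1] family (mutual independence = product rule over every
   finite subfamily) *)
Definition iid_uniform {R : realType} {d : measure_display} {T : measurableType d}
  (P : probability T R) (U : nat -> nat -> T -> R) : Prop :=
  (forall i t, measurable_fun setT (U i t)) /\
  (forall i t (x : R), 0 <= x <= 1 -> P [set w | U i t w <= x] = x%:E) /\
  (forall (s : seq (nat * nat)) (B : nat * nat -> set R), uniq s ->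
     (forall j, measurable (B j)) ->
     P (\big[setI/setT]_(j <- s) (U j.1 j.2 @^-1` B j)) =
     (\prod_(j <- s) P (U j.1 j.2 @^-1` B j))%E).

(* Main.v *)
Require Import Defs.
From mathcomp Require Import all_boot all_order all_algebra.
From mathcomp Require Import all_classical all_reals all_analysis.
From mathcomp Require Import ring lra.
Import Order.TTheory GRing.Theory Num.Theory.
Import numFieldNormedType.Exports.
Local Open Scope classical_set_scope.
Local Open Scope ring_scope.

Lemma geom_lim (R : realType) (g x y : R) (f : nat -> R) :
  0 <= g < 1 -> f 0%N = x -> (forall t, f t.+1 = y) ->
  limn (series (fun t => g ^+ t * f t)) = x - y + y / (1 - g).
Proof.
move=> /andP[g0 g1] Hf0 HfS.
have Hs n : series (fun t => g ^+ t * f t) n.+1 = (x - y) + series (geometric y g) n.+1.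
  rewrite /series /= !big_nat_recl // expr0 mul1r Hf0 /=.
  rewrite (eq_bigr (fun i => y * g ^+ i.+1)); last by move=> i _; rewrite HfS mulrC.
  rewrite ?expr0 ?mulr1; lra.
have Hg : `|g| < 1 by rewrite ger0_norm.
have H := @cvg_geometric_series _ y g Hg.
rewrite -cvg_shiftS in H.
have H2 := cvgD (cvg_cst (x - y)) H.
apply: cvg_lim => //.
rewrite -cvg_shiftS.
have E : [sequence series (fun t => g ^+ t * f t) n.+1]_n = (fun n => (x - y) + series (geometric y g) n.+1).
  by apply: funext => n /=; rewrite Hs.
rewrite E. exact: H2.
Qed.
Local Open Scope classical_set_scope.
Local Open Scope ring_scope.

Definition beta {R : realType} (k : nat) : R := harmonic k / 2.
Definition cc {R : realType} (gamma : R) : R := gamma / (1 - gamma).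
Definition tgt {R : realType} (gamma q : R) : R := if q < 1 then cc gamma else 0.
Definition bstep {R : realType} (gamma : R) (k : nat) (q : R) : R :=
  if (1 - beta k) * q + beta k * tgt gamma q == 1 then beta k / 2 else beta k.
Fixpoint qs {R : realType} (gamma : R) (k : nat) : R :=
  match k with
  | 0 => 0
  | k'.+1 => (1 - bstep gamma k' (qs gamma k')) * qs gamma k'
             + bstep gamma k' (qs gamma k') * tgt gamma (qs gamma k')
  end.
Definition ph {R : realType} (gamma : R) (k : nat) : bool := 1 < qs gamma k.

Lemma beta_gt0 (R : realType) k : 0 < @beta R k.
Proof. by rewrite /beta divr_gt0 // harmonic_gt0. Qed.

Lemma harmonic_le1 (R : realType) k : harmonic k <= 1 :> R.
Proof. by rewrite /= invf_le1 // ?ler1n // ltr0n. Qed.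

Lemma beta_le (R : realType) k : @beta R k <= 2^-1.
Proof. rewrite /beta; have := harmonic_le1 R k; lra. Qed.

Lemma bstep_bounds (R : realType) gamma k (q : R) :
  beta k / 2 <= bstep gamma k q <= beta k.
Proof.
have := beta_gt0 R k; rewrite /bstep; case: ifP => _ h; apply/andP; split; lra.
Qed.

Lemma cc_gt1 (R : realType) (gamma : R) : 2^-1 < gamma < 1 -> 1 < cc gamma.
Proof.
move=> /andP[g1 g2]; rewrite /cc ltr_pdivlMr; lra.
Qed.

Lemma qs_neq1 (R : realType) (gamma : R) k : 2^-1 < gamma < 1 -> qs gamma k != 1.
Proof.
move=> hg; have c1 := @cc_gt1 R gamma hg.
elim: k => [|k IH]; first by rewrite /= eq_sym oner_eq0.
rewrite /=; set q := qs gamma k; set t := tgt gamma q.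
have qt : q != t.
  rewrite /t /tgt; case: ifP => h; first by apply/eqP => E; move: h; rewrite E; lra.
  apply/eqP => E; move: h IH; rewrite -/q E; lra.
have bp := beta_gt0 R k.
rewrite /bstep -/t; case: ifP => [/eqP E1|/negbT //].
apply/eqP => E2; move/eqP: qt; apply.
have : (t - q) * beta k = 0 by nra.
by move/eqP; rewrite mulf_eq0 (gt_eqF bp) orbF subr_eq0 eq_sym => /eqP.
Qed.

Lemma series_nd (R : realType) (v : nat -> R) : (forall n, 0 <= v n) ->
  nondecreasing_seq (series v).
Proof. by move=> h; apply/nondecreasing_seqP => n; rewrite seriesSr lerDl. Qed.

Lemma harm_oo (R : realType) : series (@harmonic R) @ \oo --> +oo.
Proof.
apply: nondecreasing_dvgn_lt; first by apply: series_nd => n; exact: harmonic_ge0.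
exact: dvg_harmonic.
Qed.

Lemma ser_oo (R : realType) (v : nat -> R) (c : R) : 0 < c ->
  (forall n, c * harmonic n <= v n) -> series v @ \oo --> +oo.
Proof.
move=> c0 hv; apply/cvgryPge => A.
have [N _ HN] := (proj1 (cvgryPge _) (harm_oo R)) (A / c).
exists N => // m /= Hm.
have h1 := HN m Hm.
have h2 : c * series harmonic m <= series v m.
  rewrite /series /= mulr_sumr; apply: ler_sum => i _; exact: hv.
have h3 : A <= c * series harmonic m.
  by rewrite -ler_pdivrMl // mulrC.
exact: le_trans h3 h2.
Qed.

Lemma no_decay (R : realType) (x : nat -> R) (d : R) K : 0 < d ->
  (forall k, (K <= k)%N -> d < x k /\ x k.+1 <= x k - beta k / 2 * d) -> False.
Proof.
move=> d0 hx.
pose y n := x (K + n)%N + d / 2 * series (@beta R) (K + n)%N.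
have hy n : y n <= y 0%N.
  elim: n => [//|n IH]; apply: le_trans IH.
  rewrite /y addnS seriesSr.
  have [_ h] := hx (K + n)%N (leq_addr _ _).
  have E : d / 2 * beta (K + n) = beta (K + n) / 2 * d by ring.
  rewrite mulrDr; lra.
have hoo : series (@beta R) @ \oo --> +oo.
  by apply: (@ser_oo _ _ 2^-1) => // n; rewrite /beta mulrC.
have [N _ HN] := (proj1 (cvgryPge _) hoo) (2 / d * y 0%N).
have h1 := HN (K + N)%N (leq_addl _ _).
have h2 := hy N.
have [h3 _] := hx (K + N)%N (leq_addr _ _).
move: h1 h2 h3; set s := series _ _; set X := x _; set Y := y 0%N.
move=> h1 h2 h3.
have h2' : X + d / 2 * s <= Y by exact: h2.
have h4 : d / 2 * (2 / d * Y) <= d / 2 * s by rewrite ler_pM2l // divr_gt0.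
have E : d / 2 * (2 / d * Y) = Y by field; rewrite gt_eqF.
rewrite E in h4; lra.
Qed.

Lemma ph_io (R : realType) (gamma : R) : 2^-1 < gamma < 1 ->
  forall K, exists k, (K <= k)%N /\ ph gamma k.
Proof.
move=> hg K; apply: contrapT => H.
have hk k : (K <= k)%N -> qs gamma k < 1.
  move=> Kk; have : ~~ ph gamma k by apply/negP => p; apply: H; exists k.
  by rewrite /ph -leNgt le_eqVlt (negbTE (@qs_neq1 R gamma k hg)).
have c1 := @cc_gt1 R gamma hg.
apply: (@no_decay R (fun k => cc gamma - qs gamma k) (cc gamma - 1) K); first lra.
move=> k Kk; have q1 := hk k Kk; split; first lra.
rewrite /= /tgt q1.
have /andP[b1 b2] := bstep_bounds R gamma k (qs gamma k); have bp := beta_gt0 R k.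
move: b1 b2 bp q1 c1; set b := bstep _ _ _; set q := qs gamma k; set c := cc gamma.
move=> b1 b2 bp q1 c1.
have h1 : 0 <= (b - beta k / 2) * (c - q) by apply: mulr_ge0; lra.
have h2 : 0 <= beta k / 2 * ((c - q) - (c - 1)) by apply: mulr_ge0; lra.
have E1 : (b - beta k / 2) * (c - q) = b * c - b * q - beta k / 2 * c + beta k / 2 * q by ring.
have E2 : beta k / 2 * ((c - q) - (c - 1)) = beta k / 2 - beta k / 2 * q by ring.
have E3 : c - ((1 - b) * q + b * c) = c - q + b * q - b * c by ring.
have E4 : beta k / 2 * (c - 1) = beta k / 2 * c - beta k / 2 by ring.
rewrite E3 E4; lra.
Qed.

Lemma nph_io (R : realType) (gamma : R) : 2^-1 < gamma < 1 ->
  forall K, exists k, (K <= k)%N /\ ~~ ph gamma k.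
Proof.
move=> hg K; apply: contrapT => H.
have hk k : (K <= k)%N -> 1 < qs gamma k.
  move=> Kk; apply: contrapT => p; apply: H; exists k; split => //.
  by apply/negP.
apply: (@no_decay R (fun k => qs gamma k) 1 K); first lra.
move=> k Kk; have q1 := hk k Kk; split; first exact: q1.
rewrite /= /tgt ltNge (ltW q1) /=.
have /andP[b1 b2] := bstep_bounds R gamma k (qs gamma k); have bp := beta_gt0 R k.
move: b1 b2 bp q1; set b := bstep _ _ _; set q := qs gamma k.
move=> b1 b2 bp q1.
have h1 : 0 <= (b - beta k / 2) * (q - 1) by apply: mulr_ge0; lra.
have E1 : (b - beta k / 2) * (q - 1) = b * q - b - beta k / 2 * q + beta k / 2 by ring.
have h2 : 0 <= beta k / 2 * (q - 1) by apply: mulr_ge0; lra.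
have E2 : beta k / 2 * (q - 1) = beta k / 2 * q - beta k / 2 by ring.
have E3 : (1 - b) * q + b * 0 = q - b * q by ring.
rewrite E3 mulr1; lra.
Qed.

Fixpoint cnt (p : nat -> bool) (k : nat) : nat :=
  if k is k'.+1 then (cnt p k' + p k')%N else 0%N.
Definition myQ0 {R : realType} : bool -> R := fun a => if a then 1 else 0.
Definition mynu {R : realType} (gamma : R) : nat -> history -> R :=
  fun k _ => if ph gamma k then 1 else 0.
Definition myalpha {R : realType} (gamma : R) : nat -> bool -> history -> R :=
  fun k a _ => if a then (if ph gamma k then beta (cnt (ph gamma) k) else 0)
               else bstep gamma k (qs gamma k).
Definition Dh {R : realType} (gamma : R) : history :=
  fun i t => if i is j.+1 then (if t == 0%N then ph gamma j else ~~ ph gamma j) else false.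

Lemma tau_D (R : realType) (gamma : R) k a :
  tau (Dh gamma) k.+1 a = Some (if a == ph gamma k then 0%N else 1%N).
Proof.
have H1 : (Dh gamma k.+1 1%N == a) = (a != ph gamma k)
  by rewrite /Dh /=; case: a; case: (ph gamma k).
have H0 : (Dh gamma k.+1 0%N == a) = (a == ph gamma k) by rewrite /Dh /= eq_sym.
rewrite /tau; case: pselect => [pf|nex]; last first.
  exfalso; apply: nex; case: (boolP (a == ph gamma k)) => h.
    by exists 0%N; rewrite H0.
  by exists 1%N; rewrite H1.
congr Some; case: ex_minnP => m Hm Hmin; clear pf.
case: ifP => h.
  by apply/eqP; rewrite -leqn0; apply: Hmin; rewrite H0.
have := Hmin 1%N; rewrite H1 h => /(_ isT).
by case: m Hm {Hmin} => [|[|m]] //; rewrite H0 h.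
Qed.

Lemma Gret_D0 (R : realType) (gamma : R) k : 2^-1 < gamma < 1 ->
  Gret gamma (Dh gamma) k.+1 false = tgt gamma (qs gamma k).
Proof.
move=> hg; have g01 : 0 <= gamma < 1 by move: hg => /andP[? ?]; apply/andP; split; lra.
have n1 := @qs_neq1 R gamma k hg.
rewrite /Gret tau_D /tgt.
case E: (ph gamma k) => /=.
  have -> : qs gamma k < 1 = false by move: E; rewrite /ph => e; apply/negbTE; rewrite -leNgt ltW.
  rewrite (@geom_lim R gamma 0 0) //; first by rewrite subrr add0r mul0r.
    by rewrite /Dh /= E.
  by move=> t; rewrite /Dh /= E.
have -> : qs gamma k < 1.
  by move: E; rewrite /ph => /negbT; rewrite -leNgt le_eqVlt (negbTE n1).
rewrite (@geom_lim R gamma 0 1) //.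
- rewrite /cc; move: hg => /andP[_ g1]; field; lra.
- by rewrite /Dh /= E.
- by move=> t; rewrite /Dh /= E.
Qed.

Lemma Gret_D1 (R : realType) (gamma : R) k : 2^-1 < gamma < 1 -> ph gamma k ->
  Gret gamma (Dh gamma) k.+1 true = 1.
Proof.
move=> hg E; have g01 : 0 <= gamma < 1 by move: hg => /andP[? ?]; apply/andP; split; lra.
rewrite /Gret tau_D E /=.
rewrite (@geom_lim R gamma 1 0) //; first by rewrite subr0 mul0r addr0.
  by rewrite /Dh /= E.
by move=> t; rewrite /Dh /= E.
Qed.

Lemma Qhat_D (R : realType) (gamma : R) k : 2^-1 < gamma < 1 ->
  Qhat gamma myQ0 (myalpha gamma) (Dh gamma) k = fun a => if a then 1 else qs gamma k.
Proof.
move=> hg; apply: funext => a; elim: k a => [|k IH] a; first by case: a.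
rewrite /= IH tau_D /ind_fin /myalpha.
case: a.
  case E: (ph gamma k); last by rewrite mul0r subr0 mul1r mul0r addr0.
  by rewrite Gret_D1 // !mulr1 subrK.
by rewrite Gret_D0 // !mulr1.
Qed.

Lemma Qhat_ext (R : realType) (gamma : R) (h h' : history) k :
  (forall i, (i <= k)%N -> h i = h' i) ->
  Qhat gamma myQ0 (myalpha gamma) h k = Qhat gamma myQ0 (myalpha gamma) h' k.
Proof.
elim: k => [//|k IH] H; apply: funext => a /=.
rewrite IH; last by move=> i ik; apply: H; exact: leqW.
have Hk := H k.+1 (leqnn _).
by rewrite /Gret /tau Hk.
Qed.

Lemma egreedy_D (R : realType) (gamma : R) k : 2^-1 < gamma < 1 ->
  egreedy 0 (fun a => if a then 1 else qs gamma k) true = if ph gamma k then 0 else 1.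
Proof.
move=> hg; have n1 := @qs_neq1 R gamma k hg.
rewrite /egreedy /in_argmax /card_argmax /= eq_sym (negbTE n1) /ph leNgt.
by case: (1 < qs gamma k); rewrite /= mul0r add0r // subr0 invr1 mulr1.
Qed.

Lemma hist_D (R : realType) (gamma : R) {T : Type} (U : nat -> nat -> T -> R) w :
  2^-1 < gamma < 1 -> (forall i t, 0 <= U i t w < 1) ->
  forall k i, (i <= k)%N -> hist gamma myQ0 (mynu gamma) (myalpha gamma) U w k i = Dh gamma i.
Proof.
move=> hg HU; elim => [|k IH] i ik.
  by move: ik; rewrite leqn0 => /eqP ->.
rewrite /=; case: eqP => [->|ne].
  apply: funext => t; rewrite /episode.
  rewrite (@Qhat_ext R gamma _ (Dh gamma)) // Qhat_D // egreedy_D //.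
  have [u0 u1] : 0 <= U k t w /\ U k t w < 1 by move: (HU k t) => /andP.
  have [v0 v1] : 0 <= U k 0%N w /\ U k 0%N w < 1 by move: (HU k 0%N) => /andP.
  rewrite /mynu /Dh; case: t u0 u1 => [|t] u0 u1 /=.
    by case: (ph gamma k); [rewrite v1 | rewrite ltNge v0].
  by case: (ph gamma k); [rewrite ltNge u0 | rewrite u1].
apply: IH; move: ik; rewrite leq_eqVlt => /orP[/eqP //|].
by rewrite ltnS.
Qed.

Lemma run_D (R : realType) (gamma : R) {T : Type} (U : nat -> nat -> T -> R) w :
  2^-1 < gamma < 1 -> (forall i t, 0 <= U i t w < 1) ->
  run gamma myQ0 (mynu gamma) (myalpha gamma) U w = Dh gamma.
Proof.
move=> hg HU; apply: funext => i; rewrite /run; exact: hist_D.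
Qed.

Lemma series_0 (R : realType) (v : nat -> R) : series v 0%N = 0.
Proof. by rewrite /series /= big_mkord big_ord0. Qed.

Lemma ser_shift (R : realType) (v : nat -> R) N :
  series (fun n => v n.+1) N = series v N.+1 - v 0%N.
Proof. by rewrite /series /= big_nat_recl // addrC addKr. Qed.

Lemma sum_cnt (R : realType) (p : nat -> bool) (g : nat -> R) M :
  series (fun k => if p k then g (cnt p k) else 0) M = series g (cnt p M).
Proof.
elim: M => [|M IH]; first by rewrite !series_0.
rewrite seriesSr IH /=; case: (p M) => /=.
  by rewrite addn1 seriesSr.
by rewrite addn0 addr0.
Qed.

Lemma cnt_mono (p : nat -> bool) m d : (cnt p m <= cnt p (m + d))%N.
Proof.
elim: d => [|d IH]; first by rewrite addn0.
rewrite addnS /=; exact: (leq_trans IH (leq_addr _ _)).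
Qed.

Lemma cnt_mono' (p : nat -> bool) m n : (m <= n)%N -> (cnt p m <= cnt p n)%N.
Proof. by move=> mn; have := cnt_mono p m (n - m); rewrite subnKC. Qed.

Lemma cnt_unb (p : nat -> bool) : (forall K, exists k, (K <= k)%N /\ p k) ->
  forall M, exists N, (M <= cnt p N)%N.
Proof.
move=> H; elim => [|M [N HN]]; first by exists 0%N.
have [k [Nk pk]] := H N.
exists k.+1; rewrite /= pk addn1 ltnS.
exact: leq_trans HN (cnt_mono' p N k Nk).
Qed.

Lemma beta_oo (R : realType) : series (@beta R) @ \oo --> +oo.
Proof. by apply: (@ser_oo _ _ 2^-1) => // n; rewrite /beta mulrC. Qed.

Lemma harm_dec (R : realType) n : harmonic n.+1 <= harmonic n :> R.
Proof.
by rewrite /= lef_pV2 ?posrE ?ltr0n // ler_nat.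
Qed.

Lemma harm_half (R : realType) n : harmonic n / 2 <= harmonic n.+1 :> R.
Proof.
rewrite /= -invfM lef_pV2 ?posrE ?ltr0n ?mulr_gt0 // -natrM ler_nat.
by rewrite muln2 -addnn addSn ltnS leq_addl.
Qed.

Lemma harm2_bound (R : realType) n :
  series (fun k => (harmonic k : R) ^+ 2) n <= 2 - 2 / n.+1%:R.
Proof.
elim: n => [|n IH]; first by rewrite series_0 divr1 subrr.
rewrite seriesSr.
have -> : (n.+2%:R : R) = n.+1%:R + 1 by rewrite -addn1 natrD.
set a : R := n.+1%:R.
have -> : (harmonic n : R) = a^-1 by [].
have a1 : 1 <= a by rewrite /a ler1n.
have E : 2 / a - 2 / (a + 1) - (a^-1) ^+ 2 = (a - 1) / (a ^+ 2 * (a + 1)).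
  field; apply/andP; split; apply/negP => /eqP h; move: a1; rewrite ?h; lra.
have : 0 <= (a - 1) / (a ^+ 2 * (a + 1)).
  apply: divr_ge0; first lra.
  apply: mulr_ge0; [exact: sqr_ge0|lra].
rewrite -E; move: IH; rewrite -/a; move: (series _ n) (a^-1 ^+ 2) (2 / a) (2 / (a + 1)) => S X Y Z; lra.
Qed.

Lemma ser_cvg (R : realType) (v : nat -> R) (M : R) : (forall n, 0 <= v n) ->
  (forall n, series v n <= M) -> cvgn (series v).
Proof.
move=> h0 hM; apply: nondecreasing_is_cvgn; first exact: series_nd.
by exists M => _ [n _ <-].
Qed.

Lemma sq_le (R : realType) (x y : R) : 0 <= x -> x <= y -> x ^+ 2 <= y ^+ 2.
Proof. by move=> x0 xy; rewrite !expr2; apply: ler_pM. Qed.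

Lemma ser_le2 (R : realType) (v : nat -> R) n :
  (forall k, v k <= (harmonic k) ^+ 2) -> series v n <= 2.
Proof.
move=> hv; apply: (@le_trans _ _ (series (fun k => (harmonic k : R) ^+ 2) n)).
  by rewrite /series /=; apply: ler_sum => i _; exact: hv.
apply: le_trans (harm2_bound R n) _.
have : 0 <= 2 / (n.+1%:R : R) by apply: divr_ge0.
move: (2 / _) => z; lra.
Qed.

Lemma beta_le_harm (R : realType) k : @beta R k <= harmonic k.
Proof. rewrite /beta; have := @harmonic_gt0 R k; lra. Qed.

Lemma alpha1_oo (R : realType) (gamma : R) : 2^-1 < gamma < 1 ->
  series (fun n => myalpha gamma n.+1 true (Dh gamma) * ind_fin R (tau (Dh gamma) n.+2 true))
    @ \oo --> +oo.
Proof.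
move=> hg.
pose v k : R := if ph gamma k then beta (cnt (ph gamma) k) else 0.
have v0 : v 0%N = 0 by rewrite /v /ph /=; case: ifP => // h; move: h; lra.
have E : (fun n => myalpha gamma n.+1 true (Dh gamma) * ind_fin R (tau (Dh gamma) n.+2 true))
   = (fun n => v n.+1).
  by apply: funext => n; rewrite tau_D /= mulr1.
rewrite E; apply/cvgryPge => A.
have [N0 _ H0] := (proj1 (cvgryPge _) (beta_oo R)) A.
have [N1 H1] := @cnt_unb (ph gamma) (@ph_io R gamma hg) N0.
exists N1 => // m /= Hm.
have Hv : series v m.+1 = series beta (cnt (ph gamma) m.+1) := sum_cnt _ _ _ _.
rewrite ser_shift v0 subr0 Hv.
apply: H0 => /=; exact: leq_trans H1 (cnt_mono' _ _ _ (leqW Hm)).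
Qed.

Lemma alpha0_oo (R : realType) (gamma : R) : 2^-1 < gamma < 1 ->
  series (fun n => myalpha gamma n.+1 false (Dh gamma) * ind_fin R (tau (Dh gamma) n.+2 false))
    @ \oo --> +oo.
Proof.
move=> hg; apply: (@ser_oo _ _ 8^-1) => // n.
rewrite tau_D /ind_fin mulr1 /myalpha.
have /andP[b1 _] := bstep_bounds R gamma n.+1 (qs gamma n.+1).
have := harm_half R n; move: b1; rewrite /beta. move: (harmonic n) (harmonic n.+1) (bstep _ _ _) => x y z. lra.
Qed.

Lemma alpha0_sq (R : realType) (gamma : R) : 2^-1 < gamma < 1 ->
  cvgn (series (fun n => (myalpha gamma n.+1 false (Dh gamma)) ^+ 2
                         * ind_fin R (tau (Dh gamma) n.+2 false))).
Proof.
move=> hg; apply: (@ser_cvg _ _ 2).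
  by move=> n; rewrite tau_D /= mulr1; exact: sqr_ge0.
move=> n; apply: ser_le2 => k; rewrite tau_D /= mulr1.
have /andP[b1 b2] := bstep_bounds R gamma k.+1 (qs gamma k.+1).
have bp := beta_gt0 R k.+1.
apply: sq_le; first lra.
apply: le_trans b2 _; apply: le_trans (beta_le_harm R k.+1) _; exact: harm_dec.
Qed.

Lemma alpha1_sq (R : realType) (gamma : R) : 2^-1 < gamma < 1 ->
  cvgn (series (fun n => (myalpha gamma n.+1 true (Dh gamma)) ^+ 2
                         * ind_fin R (tau (Dh gamma) n.+2 true))).
Proof.
move=> hg; apply: (@ser_cvg _ _ 2).
  by move=> n; rewrite tau_D /= mulr1; exact: sqr_ge0.
move=> N.
pose v k : R := if ph gamma k then (fun j => beta j ^+ 2) (cnt (ph gamma) k) else 0.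
have v0 : v 0%N = 0 by rewrite /v /ph /=; case: ifP => // h; move: h; lra.
have E : (fun n => (myalpha gamma n.+1 true (Dh gamma)) ^+ 2
                   * ind_fin R (tau (Dh gamma) n.+2 true)) = (fun n => v n.+1).
  apply: funext => n; rewrite tau_D /= mulr1 /v /myalpha.
  by case: (ph gamma n.+1); rewrite // expr2 mul0r.
rewrite E ser_shift v0 subr0.
have -> : series v N.+1 = series (fun j => beta j ^+ 2) (cnt (ph gamma) N.+1) := sum_cnt _ _ _ _.
apply: ser_le2 => k; apply: sq_le; [exact: ltW (beta_gt0 R k)|exact: beta_le_harm].
Qed.

Lemma U_ae (R : realType) (d : measure_display) (T : measurableType d)
  (P : probability T R) (U : nat -> nat -> T -> R) i t :
  iid_uniform P U -> {ae P, forall w, 0 <= U i t w < 1}.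
Proof.
move=> [Hm [Hd _]].
have mpre Y : measurable Y -> measurable (U i t @^-1` Y).
  by move=> mY; have := Hm i t measurableT Y mY; rewrite setTI.
have h1 : {ae P, forall w, 0 <= U i t w}.
  exists [set w | U i t w <= 0]; split.
  - have -> : [set w | U i t w <= 0] = U i t @^-1` `]-oo, 0] by apply/seteqP; split => w /=; rewrite in_itv.
    exact: mpre.
  - by rewrite Hd // lexx ler01.
  - by move=> w /= h; rewrite leNgt; apply/negP => h'; apply: h; exact: ltW.
have h2 : {ae P, forall w, U i t w < 1}.
  set N := U i t @^-1` `[1, +oo[.
  have mN : measurable N by exact: mpre.
  have bnd n : (P N <= (harmonic n.+1 : R)%:E)%E.
    set x : R := harmonic n.+1.
    have x0 : 0 < x by exact: harmonic_gt0.
    have x1 : x <= 1 by exact: harmonic_le1.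
    set A := [set w | U i t w <= 1 - x].
    have mA : measurable A.
      have -> : A = U i t @^-1` `]-oo, 1 - x] by apply/seteqP; split => w /=; rewrite in_itv.
      exact: mpre.
    have NA : N `<=` ~` A. move=> w; rewrite /N /A /= in_itv /= andbT => h h'. lra.
    apply: (@le_trans _ _ (P (~` A))).
      by apply: le_measure; rewrite ?inE //; exact: measurableC.
    rewrite probability_setC // /A Hd; last by apply/andP; split; lra.
    by rewrite -EFinD opprB addrC subrK lexx.
  exists N; split => //; last first.
    by move=> w /= h; rewrite /N /= in_itv /= andbT leNgt; apply/negP.
  have [r Er] : exists r : R, P N = r%:E.
    have ge : (0 <= P N)%E := measure_ge0 P N.
    have le := bnd 0%N.
    move: ge le; case: (P N) => [r _ _|//|//].
    by exists r.
  have r0 : (0:R) <= r.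
    have ge : (0 <= P N)%E := measure_ge0 P N.
    by move: ge; rewrite Er lee_fin.
  rewrite Er; congr EFin; apply/eqP; rewrite eq_le r0 andbT.
  rewrite leNgt; apply/negP => rpos.
  have := cvg_harmonic (R := R); move/cvgrPdist_lt => /(_ r rpos) [M _ HM].
  have := HM M.+1 (leqW (leqnn _)); rewrite /= sub0r normrN ger0_norm; last exact: harmonic_ge0.
  have := bnd M; rewrite Er lee_fin.
  move=> a b; move: a; rewrite [harmonic _]/=; move: b; move: (M.+2%:R^-1) => z; lra.
apply: filterS2 h1 h2 => w a b; by rewrite a b.
Qed.

Lemma good_ae (R : realType) (d : measure_display) (T : measurableType d)
  (P : probability T R) (U : nat -> nat -> T -> R) :
  iid_uniform P U -> {ae P, forall w, forall i t, 0 <= U i t w < 1}.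
Proof.
move=> HU; apply: ae_foralln => i; apply: ae_foralln => t; exact: U_ae.
Qed.

Lemma Vpi_val (R : realType) (gamma : R) (p : bool -> R) : 0 <= gamma < 1 ->
  Vpi gamma p = p true / (1 - gamma).
Proof.
move=> hg; rewrite /Vpi (@geom_lim R gamma (p true) (p true)) //.
- by rewrite subrr add0r.
- by rewrite /reward mulr0 add0r mulr1.
- by move=> t; rewrite /reward mulr0 add0r mulr1.
Qed.

Lemma V_not_cvg (R : realType) (gamma : R) : 2^-1 < gamma < 1 ->
  ~ cvg ((fun k => Vpi gamma (egreedy 0 (Qhat gamma myQ0 (myalpha gamma) (Dh gamma) k))) @ \oo).
Proof.
move=> hg; have g01 : 0 <= gamma < 1 by move: hg => /andP[? ?]; apply/andP; split; lra.
have E : (fun k => Vpi gamma (egreedy 0 (Qhat gamma myQ0 (myalpha gamma) (Dh gamma) k)))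
   = (fun k => (if ph gamma k then 0 else 1) / (1 - gamma)).
  by apply: funext => k; rewrite Qhat_D // Vpi_val // egreedy_D.
rewrite E => /cvg_ex [l /cvgrPdist_lt Hl].
set m : R := 1 / (1 - gamma).
have m0 : 0 < m by rewrite /m divr_gt0 //; move: hg => /andP[_ ?]; lra.
have [N _ HN] := Hl (m / 2) (divr_gt0 m0 (ltr0Sn _ 1)).
have [k1 [Nk1 p1]] := @ph_io R gamma hg N.
have [k2 [Nk2 p2]] := @nph_io R gamma hg N.
have := HN k1 Nk1; have := HN k2 Nk2; rewrite /= p1 (negbTE p2) mul0r -/m.
rewrite !ltr_distlC; move: m0; lra.
Qed.

Lemma hmeas_cst (R : realType) (f : history -> R) (c : R) :
  (forall h, f h = c) -> hmeasurable f.
Proof.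
move=> hf B _.
have -> : f @^-1` B = if c \in B then setT else set0.
  apply/seteqP; split => h /=; rewrite hf.
    by move=> cB; rewrite mem_set.
  by case: ifP => // /set_mem.
case: ifP => _; last exact: sigma_algebra0.
have [s0 sC _] := @smallest_sigma_algebra _ setT cyl.
have := sC set0 s0; rewrite setD0; exact.
Qed.

Theorem proposition2p4 (R : realType) (gamma : R) :
  2^-1 < gamma < 1 ->
  exists (Q0 : bool -> R) (nu : nat -> history -> R)
         (alpha : nat -> bool -> history -> R),
    nu_ok nu /\ alpha_ok alpha /\
    forall (d : measure_display) (T : measurableType d) (P : probability T R)
           (U : nat -> nat -> T -> R),
      iid_uniform P U ->
      {ae P, forall w,
        let h := run gamma Q0 nu alpha U w in
        (forall a : bool,
           series (fun n => alpha n.+1 a h * ind_fin R (tau h n.+2 a)) @ \oo --> +oo) /\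
        (forall a : bool,
           cvg (series (fun n => (alpha n.+1 a h) ^+ 2 * ind_fin R (tau h n.+2 a)) @ \oo)) /\
        ~ cvg ((fun k => Vpi gamma (egreedy 0 (Qhat gamma Q0 alpha h k))) @ \oo)}.
Proof.
move=> hg.
exists myQ0, (mynu gamma), (myalpha gamma); split; [|split].
- move=> k; split; [|split].
  + exact: (@hmeas_cst R _ (if ph gamma k then 1 else 0)).
  + by move=> h; rewrite /mynu; case: ifP => _; apply/andP; split; lra.
  + by [].
- move=> k a; split; [|split].
  + exact: (@hmeas_cst R _ (myalpha gamma k a (fun _ _ => false))).
  + move=> h; rewrite /myalpha; case: a.
      case: ifP => _; last by apply/andP; split; lra.
      have := beta_gt0 R (cnt (ph gamma) k); have := beta_le R (cnt (ph gamma) k).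
      by move=> a b; apply/andP; split; lra.
    have := bstep_bounds R gamma k (qs gamma k); have := beta_gt0 R k; have := beta_le R k.
    by move=> a b /andP[c e]; apply/andP; split; lra.
  + by [].
- move=> d T P U HU.
  move: (@good_ae R d T P U HU); apply: filterS => w Hw.
  rewrite (@run_D R gamma T U w hg Hw) /=.
  split; [|split].
  + by case; [exact: (@alpha1_oo R gamma hg) | exact: (@alpha0_oo R gamma hg)].
  + by case; [exact: (@alpha1_sq R gamma hg) | exact: (@alpha0_sq R gamma hg)].
  + exact: (@V_not_cvg R gamma hg).
Qed.
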